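(* For the $k$-server problem on the line, for every instance $I$, every prediction, and every $\lambda\in[0,1]$, there is $c>0$ depending only on the initial configuration such that $\mathrm{LambdaDC}(I)\le\alpha(k)\cdot\mathrm{FtP}(I)+c$, where $\alpha(k)=1+2\lambda+\dots+2\lambda^{(k-1)/2}$ if $k$ is odd and $\alpha(k)=1+2\lambda+\dots+2\lambda^{k/2-1}+\lambda^{k/2}$ if $k$ is even.
   Context: The $k$-server problem on the line: servers on $\mathbb{R}$ labeled $s_1\le\dots\le s_k$, requests revealed online and served by moving a server to them; cost = total distance moved. A prediction gives for each request $r_t$ an index $p_t\in\{1,\dots,k\}$; FtP serves each request by server $s_{p_t}$ (relabeling by position), $\mathrm{FtP}(I)$ being its cost. LambdaDC with parameter $\lambda$: if $r_t<s_1$ or $r_t>s_k$, move only the closest server; if $s_i<r_t<s_{i+1}$ and $p_t\le i$, move $s_i$ at speed $1$ and $s_{i+1}$ at speed $\lambda$ towards $r_t$ until one reaches it; if $p_t\ge i+1$, the speeds are swapped. *)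

(* Defs.v *)
From HB Require Import structures.
From mathcomp Require Import all_boot all_order all_algebra.
Set Implicit Arguments. Unset Strict Implicit. Unset Printing Implicit Defensive.
Import Order.TTheory GRing.Theory Num.Theory.
Local Open Scope ring_scope.

Section KServer.
Variable R : realFieldType.

(* A configuration is a sequence of server positions.  For LambdaDC it is kept
   sorted (s_1 <= ... <= s_k, stored at indices 0..k-1).  A request is a pair
   (r, p) of a point r and a predicted server index p (0-based: p = p_t - 1). *)

Definition dc_step (lam : R) (c : seq R) (r : R) (p : nat) : seq R * R :=
  let k := size c in
  if r < nth 0 c 0 then (set_nth 0 c 0 r, nth 0 c 0 - r)
  else if nth 0 c k.-1 < r then (set_nth 0 c k.-1 r, r - nth 0 c k.-1)
  else if r \in c then (c, 0)
  else
    (* s_i < r < s_{i+1}, with i the (0-based) index of the last server left of r *)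
    let i := (count (fun x => x < r) c).-1 in
    let a := nth 0 c i in
    let b := nth 0 c i.+1 in
    let d1 := r - a in
    let d2 := b - r in
    if (p <= i)%N then
      (* left server at speed 1, right server at speed lam *)
      if lam * d1 <= d2 then
        (set_nth 0 (set_nth 0 c i r) i.+1 (b - lam * d1), (1 + lam) * d1)
      else
        (set_nth 0 (set_nth 0 c i (a + d2 / lam)) i.+1 r, d2 / lam + d2)
    else
      (* right server at speed 1, left server at speed lam *)
      if lam * d2 <= d1 then
        (set_nth 0 (set_nth 0 c i (a + lam * d2)) i.+1 r, (1 + lam) * d2)
      else
        (set_nth 0 (set_nth 0 c i r) i.+1 (b - d1 / lam), d1 / lam + d1).

Fixpoint dc_cost (lam : R) (c : seq R) (I : seq (R * nat)) : R :=
  match I with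
  | [::] => 0
  | (r, p) :: I' => (dc_step lam c r p).2 + dc_cost lam (dc_step lam c r p).1 I'
  end.

Definition LambdaDC (lam : R) (s0 : seq R) (I : seq (R * nat)) : R :=
  dc_cost lam (sort <=%R s0) I.

Definition ftp_step (c : seq R) (r : R) (p : nat) : seq R * R :=
  let c' := sort <=%R c in
  (sort <=%R (set_nth 0 c' p r), `|nth 0 c' p - r|).

Fixpoint FtP (c : seq R) (I : seq (R * nat)) : R :=
  match I with
  | [::] => 0
  | (r, p) :: I' => (ftp_step c r p).2 + FtP (ftp_step c r p).1 I'
  end.

Definition alpha (lam : R) (k : nat) : R :=
  if odd k then 1 + 2 * \sum_(1 <= j < (k./2).+1) lam ^+ j
  else 1 + 2 * \sum_(1 <= j < k./2) lam ^+ j + lam ^+ (k./2).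

End KServer.

(* Main.v *)
Require Import Defs.
From HB Require Import structures.
From mathcomp Require Import all_boot all_order all_algebra.
From mathcomp Require Import lra zify.
Import Order.TTheory GRing.Theory Num.Theory.
Local Open Scope ring_scope.
Set Implicit Arguments. Unset Strict Implicit.

Ltac nsplit := repeat match goal with |- context [ `|?e| ] =>
  let h := fresh "hn" in case: (lerP 0 e) => h;
  [rewrite (ger0_norm h) | rewrite (ltr0_norm h)] end.

Section Aux.
Variable R : realFieldType.

Fixpoint costL (x w : seq R) : R :=
  match x, w with a :: x', b :: w' => `|a - b| + costL x' w' | _, _ => 0 end.

Lemma costL_ge0 x w : 0 <= costL x w.
Proof. elim: x w => [|a x IH] [|b w] //=; exact: addr_ge0. Qed.

Lemma costL_cat x1 x2 w1 w2 : size x1 = size w1 ->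
  costL (x1 ++ x2) (w1 ++ w2) = costL x1 w1 + costL x2 w2.
Proof.
elim: x1 w1 => [|a x IH] [|b w] //=; first by rewrite add0r.
by move=> [e]; rewrite IH // addrA.
Qed.

Lemma costL_setw x w j v : (j < size x)%N -> size w = size x ->
  costL x (set_nth 0 w j v) = costL x w + `|x`_j - v| - `|x`_j - w`_j|.
Proof.
elim: x w j => [|a x IH] [|b w] [|j] //= hj [e].
- lra.
- by rewrite IH // !addrA.
Qed.

Lemma costL_setx x w j v : (j < size x)%N -> size w = size x ->
  costL (set_nth 0 x j v) w = costL x w + `|v - w`_j| - `|x`_j - w`_j|.
Proof.
elim: x w j => [|a x IH] [|b w] [|j] //= hj [e].
- lra.
- by rewrite IH // !addrA.
Qed.

Lemma four_pt (a a' b b' : R) : a <= a' -> b <= b' ->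
  `|a - b| + `|a' - b'| <= `|a - b'| + `|a' - b|.
Proof. move=> h1 h2; nsplit; lra. Qed.

Lemma set_nthE (s : seq R) n v : (n < size s)%N ->
  set_nth 0 s n v = take n s ++ v :: drop n.+1 s.
Proof. elim: s n => [|a s IH] [|n] //= h; first by rewrite drop0. by rewrite IH. Qed.

Lemma rearr xs ys ws : sorted <=%R xs -> sorted <=%R ys -> perm_eq ws ys ->
  size xs = size ys -> costL xs ys <= costL xs ws.
Proof.
elim: xs ys ws => [|x xs IH] ys ws sx sy pw hs; first by case: ys ws {sy pw hs} => [|??] [|??].
case: ys sy pw hs => [|y ys] // sy pw [hs].
have := perm_size pw; case: ws pw => [|w ws] // pw [hws].
have sxs : sorted <=%R xs by exact: path_sorted sx.
have sys : sorted <=%R ys by exact: path_sorted sy.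
have [ewy|nwy] := eqVneq w y.
  subst w; by rewrite /= lerD2l; apply: IH => //; rewrite perm_cons in pw.
have yin : y \in ws.
  have : y \in w :: ws by rewrite (perm_mem pw) mem_head.
  by rewrite in_cons eq_sym (negbTE nwy).
set n := index y ws.
have hn : (n < size ws)%N by rewrite index_mem.
have ny : ws`_n = y by rewrite nth_index.
set ws2 := set_nth 0 ws n w.
have p2 : perm_eq ws2 ys.
  rewrite -(perm_cons y); apply: perm_trans pw.
  rewrite /ws2 set_nthE //.
  have -> : w :: ws = w :: (take n ws ++ y :: drop n.+1 ws).
    by rewrite -[in LHS](cat_take_drop n ws) (drop_nth 0 hn) ny.
  apply/permP => a /=; rewrite !count_cat /=; lia.
have hnx : (n < size xs)%N by rewrite hs -hws.
have e2 := costL_setw w hnx (etrans hws (esym hs)).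
rewrite -/ws2 ny in e2.
have lexx : x <= xs`_n.
  have := order_path_min le_trans sx; move/allP; apply; exact: mem_nth.
have leyw : y <= w.
  have : w \in y :: ys by rewrite -(perm_mem pw) mem_head.
  rewrite in_cons => /orP [/eqP -> //|wi].
  by have := order_path_min le_trans sy; move/allP; apply.
have := IH ys ws2 sxs sys p2 hs.
have := four_pt lexx leyw.
rewrite /=; lra.
Qed.


Lemma shiftL X Y : sorted <=%R Y -> (size X < size Y)%N ->
  costL X (take (size X) (behead Y)) <=
  costL X (take (size X) Y) + Y`_(size X) - Y`_0.
Proof.
elim: X Y => [|x X IH] Y sY hs; first by rewrite /=; lra.
case: Y sY hs => [|y0 [|y1 Y]] // sY hs.
have h01 : y0 <= y1 by case/andP: sY.
have := IH (y1 :: Y) (path_sorted sY) hs.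
rewrite /=.
have : `|x - y1| <= `|x - y0| + (y1 - y0) by nsplit; lra.
lra.
Qed.

Lemma shiftR X Y : sorted <=%R Y -> (size X < size Y)%N ->
  costL X (take (size X) Y) <=
  costL X (take (size X) (behead Y)) + Y`_(size X) - Y`_0.
Proof.
elim: X Y => [|x X IH] Y sY hs; first by rewrite /=; lra.
case: Y sY hs => [|y0 [|y1 Y]] // sY hs.
have h01 : y0 <= y1 by case/andP: sY.
have := IH (y1 :: Y) (path_sorted sY) hs.
rewrite /=.
have : `|x - y0| <= `|x - y1| + (y1 - y0) by nsplit; lra.
lra.
Qed.

Lemma dec1 (s : seq R) p m : (p <= m < size s)%N ->
  s = take p s ++ take (m - p) (drop p s) ++ s`_m :: drop m.+1 s.
Proof.
move=> /andP [pm ms].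
rewrite -{1}(cat_take_drop p s); congr (_ ++ _).
rewrite -{1}(cat_take_drop (m - p) (drop p s)); congr (_ ++ _).
by rewrite drop_drop subnK // (drop_nth 0).
Qed.

Lemma dec2 (s : seq R) m p : (m <= p < size s)%N ->
  s = take m s ++ s`_m :: (take (p - m) (drop m.+1 s) ++ drop p.+1 s).
Proof.
move=> /andP [mp ps].
rewrite -{1}(cat_take_drop m s); congr (_ ++ _).
rewrite (drop_nth 0 (n:=m)); last exact: leq_ltn_trans mp ps.
congr (_ :: _).
rewrite -{1}(cat_take_drop (p - m) (drop m.+1 s)); congr (_ ++ _).
by rewrite drop_drop (_ : (p - m + m.+1 = p.+1)%N) //; lia.
Qed.

Lemma match1 (x ys : seq R) p m r : sorted <=%R ys -> size x = size ys ->
  (p <= m < size ys)%N -> x`_m <= r ->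
  let w := take p ys ++ take (m - p) (drop p.+1 ys) ++ r :: drop m.+1 ys in
  [/\ perm_eq w (set_nth 0 ys p r), size w = size ys, w`_m = r &
      costL x w <= costL x ys + `|ys`_p - r|].
Proof.
move=> sy hs /andP [pm ms] hx w.
have sz1 : size (take p ys) = p by rewrite size_takel //; lia.
have sz2 : size (take (m - p) (drop p.+1 ys)) = (m - p)%N.
  by rewrite size_takel // size_drop; lia.
split.
- rewrite /w set_nthE; last by lia.
  apply: perm_cat => //.
  rewrite -{2}(cat_take_drop (m - p) (drop p.+1 ys)) drop_drop.
  have -> : (m - p + p.+1 = m.+1)%N by lia.
  apply/permP => a /=; rewrite !count_cat /=; lia.
- rewrite /w !size_cat sz1 sz2 /= size_drop; lia.
- rewrite /w catA nth_cat size_cat sz1 sz2.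
  have -> : (p + (m - p) = m)%N by lia.
  by rewrite ltnn subnn.
have hmx : (p <= m < size x)%N by rewrite hs pm ms.
have hmy : (p <= m < size ys)%N by rewrite pm ms.
have ex := @dec1 x p m hmx.
have ey := @dec1 ys p m hmy.
have hdx : size (take p x) = p by rewrite size_takel // hs; lia.
have hdx2 : size (take (m - p) (drop p x)) = (m - p)%N.
  by rewrite size_takel // size_drop hs; lia.
have hdy2 : size (take (m - p) (drop p ys)) = (m - p)%N.
  by rewrite size_takel // size_drop; lia.
set X := take (m - p) (drop p x).
have E1 : costL x w = costL (take p x) (take p ys) + (costL X (take (m - p) (drop p.+1 ys))
   + (`|x`_m - r| + costL (drop m.+1 x) (drop m.+1 ys))).
  by rewrite {1}ex /w !costL_cat ?hdx ?sz1 ?hdx2 ?sz2.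
have E2 : costL x ys = costL (take p x) (take p ys) + (costL X (take (m - p) (drop p ys))
   + (`|x`_m - ys`_m| + costL (drop m.+1 x) (drop m.+1 ys))).
  by rewrite {1}ex {1}ey !costL_cat ?hdx ?sz1 ?hdx2 ?hdy2.
rewrite E1 E2.
have hsh := shiftL (X := X) (Y := drop p ys) (drop_sorted p sy).
rewrite hdx2 size_drop -drop1 drop_drop !nth_drop in hsh.
have hlt : (m - p < size ys - p)%N by lia.
have {hsh} hsh := hsh hlt.
rewrite addn0 (_ : (p + (m - p) = m)%N) in hsh; last by lia.
rewrite (_ : (1 + p = p.+1)%N) in hsh; last by lia.
have : ys`_m - ys`_p + `|x`_m - r| - `|x`_m - ys`_m| <= `|ys`_p - r|.
  by nsplit; lra.
lra.
Qed.


Lemma match2 (x ys : seq R) p m r : sorted <=%R ys -> size x = size ys ->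
  (m <= p < size ys)%N -> r <= x`_m ->
  let w := take m ys ++ r :: take (p - m) (drop m ys) ++ drop p.+1 ys in
  [/\ perm_eq w (set_nth 0 ys p r), size w = size ys, w`_m = r &
      costL x w <= costL x ys + `|ys`_p - r|].
Proof.
move=> sy hs /andP [mp ps] hx w.
have sz1 : size (take m ys) = m by rewrite size_takel //; lia.
have sz2 : size (take (p - m) (drop m ys)) = (p - m)%N.
  by rewrite size_takel // size_drop; lia.
split.
- rewrite /w set_nthE; last by lia.
  rewrite -(subnKC mp) takeD subnKC // -catA.
  apply: perm_cat => //.
  apply/permP => a /=; rewrite !count_cat /=; lia.
- rewrite /w !size_cat sz1 /= size_cat sz2 size_drop; lia.
- by rewrite /w nth_cat sz1 ltnn subnn.
have hmx : (m <= p < size x)%N by rewrite hs mp ps.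
have hmy : (m <= p < size ys)%N by rewrite mp ps.
have ex := @dec2 x m p hmx.
have ey := @dec2 ys m p hmy.
have hdx : size (take m x) = m by rewrite size_takel // hs; lia.
have hdx2 : size (take (p - m) (drop m.+1 x)) = (p - m)%N.
  by rewrite size_takel // size_drop hs; lia.
have hdy2 : size (take (p - m) (drop m.+1 ys)) = (p - m)%N.
  by rewrite size_takel // size_drop; lia.
set X := take (p - m) (drop m.+1 x).
have E1 : costL x w = costL (take m x) (take m ys) + (`|x`_m - r| +
   (costL X (take (p - m) (drop m ys)) + costL (drop p.+1 x) (drop p.+1 ys))).
  by rewrite {1}ex /w !costL_cat ?hdx ?sz1 //= costL_cat ?hdx2 ?sz2.
have E2 : costL x ys = costL (take m x) (take m ys) + (`|x`_m - ys`_m| +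
   (costL X (take (p - m) (drop m.+1 ys)) + costL (drop p.+1 x) (drop p.+1 ys))).
  by rewrite {1}ex {1}ey !costL_cat ?hdx ?sz1 //= costL_cat ?hdx2 ?hdy2.
rewrite E1 E2.
have hsh := shiftR (X := X) (Y := drop m ys) (drop_sorted m sy).
rewrite hdx2 size_drop -drop1 drop_drop !nth_drop in hsh.
have hlt : (p - m < size ys - m)%N by lia.
have {}hsh := hsh hlt.
rewrite addn0 (_ : (m + (p - m) = p)%N) in hsh; last by lia.
rewrite (_ : (1 + m = m.+1)%N) in hsh; last by lia.
have : `|x`_m - r| + ys`_p - ys`_m - `|x`_m - ys`_m| <= `|ys`_p - r|.
  by nsplit; lra.
lra.
Qed.

End Aux.

Section Pot.
Variable R : realFieldType.
Variable lam : R.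
Variable k : nat.
Hypothesis l0 : 0 <= lam.
Hypothesis l1 : lam <= 1.
Hypothesis k0 : (0 < k)%N.
Ltac lr := have := l0; have := l1; lra.

Definition beta m := lam ^+ (minn m (k - m)).
Definition S n := \sum_(i < n) beta i.+1.
Definition cc j := S j - S (k.-1 - j).
Definition Psi (x : seq R) := \sum_(j < k) cc j * x`_j.

Lemma S0 : S 0 = 0. Proof. by rewrite /S big_ord0. Qed.
Lemma SS n : S n.+1 = S n + beta n.+1. Proof. by rewrite /S big_ord_recr. Qed.
Lemma beta_ge0 m : 0 <= beta m. Proof. exact: exprn_ge0. Qed.
Lemma S_mono a b : (a <= b)%N -> S a <= S b.
Proof.
move=> /subnK <-; elim: (b - a)%N => [|n IH]; first by rewrite add0n.
by rewrite addSn SS; have := beta_ge0 (n + a).+1; lr.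
Qed.

Lemma beta_sym i : (i < k)%N -> beta i.+1 = beta (k - i.+1).
Proof. by move=> hi; rewrite /beta (_ : (k - (k - i.+1) = i.+1)%N); [by rewrite minnC|lia]. Qed.

Lemma S_sym i : (i <= k.-1)%N -> S k.-1 = S i + S (k.-1 - i).
Proof.
elim: i => [|i IH] hi; first by rewrite S0 add0r subn0.
rewrite IH; last by lia.
have -> : (k.-1 - i = (k.-1 - i.+1).+1)%N by lia.
rewrite !SS (@beta_sym i); last by lia.
rewrite (_ : (k - i.+1 = (k.-1 - i.+1).+1)%N); last by lia.
lr.
Qed.

Lemma geo n : (1 - lam) * \sum_(i < n) lam ^+ i.+1 = lam - lam ^+ n.+1.
Proof.
elim: n => [|n IH]; first by rewrite big_ord0 expr1; lr.
rewrite big_ord_recr /= mulrDr IH !exprS; lr.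
Qed.

Lemma beta_lb m j : (minn m (k - m) <= j)%N -> lam ^+ j <= beta m.
Proof. move=> h; apply: ler_wiXn2l => //; lia. Qed.

Lemma S_lb n : lam - lam ^+ n.+1 <= (1 - lam) * S n.
Proof.
rewrite -geo; apply: ler_wpM2l; first lr.
apply: ler_sum => i _; apply: beta_lb; exact: geq_minl.
Qed.

Lemma S_small a : (a + a <= k)%N -> S a = \sum_(i < a) lam ^+ i.+1.
Proof.
move=> h; apply: eq_bigr => i _; rewrite /beta.
have hi := ltn_ord i.
by rewrite (_ : minn i.+1 (k - i.+1) = i.+1) //; lia.
Qed.

Lemma alphaE : alpha lam k = 1 + S k.-1.
Proof.
rewrite /alpha.
have hk := odd_double_half k.
case: (boolP (odd k)) => ok.
- rewrite ok /= in hk *.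
  set n := k./2 in hk *.
  rewrite (S_sym (i := n)); last by lia.
  rewrite (_ : (k.-1 - n = n)%N); last by lia.
  rewrite S_small; last by lia.
  rewrite big_add1 /= big_mkord; lr.
- rewrite (negbTE ok) /= in hk *.
  set n := k./2 in hk *.
  have n0 : (0 < n)%N by lia.
  rewrite (S_sym (i := n)); last by lia.
  rewrite (_ : (k.-1 - n = n.-1)%N); last by lia.
  rewrite -(prednK n0) SS S_small; last by lia.
  rewrite /beta (_ : minn n.-1.+1 (k - n.-1.+1) = n.-1.+1); last by lia.
  rewrite big_add1 /= big_mkord; lr.
Qed.

Lemma I1 i : (i.+1 < k)%N ->
  (1 + lam) - alpha lam k * (1 - lam) + cc i - lam * cc i.+1 <= 0.
Proof.
move=> hi; rewrite alphaE (S_sym (i := i)); last by lia.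
rewrite /cc.
set j := (k.-1 - i)%N.
have j0 : (0 < j)%N by rewrite /j; lia.
have -> : (k.-1 - i.+1 = j.-1)%N by rewrite /j; lia.
rewrite SS -(prednK j0) SS prednK //.
have h1 := S_lb j.-1; rewrite prednK // in h1.
have h2 : lam ^+ j <= beta j by apply: beta_lb; exact: geq_minl.
have h3 : lam ^+ j <= beta i.+1 by apply: beta_lb; rewrite /j; lia.
have h4 : 0 <= lam * (beta i.+1 - lam ^+ j) by apply: mulr_ge0; lr.
have h5 : 0 <= (2 - lam) * (beta j - lam ^+ j) by apply: mulr_ge0; lr.
lr.
Qed.


Lemma cc_neg j : (j <= k.-1)%N -> cc (k.-1 - j) = - cc j.
Proof. by move=> h; rewrite /cc subKn // opprB. Qed.

Lemma I2 i : (i.+1 < k)%N ->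
  (1 + lam) - alpha lam k * (1 - lam) - cc i.+1 + lam * cc i <= 0.
Proof.
move=> hi; have := @I1 (k.-1 - i.+1) ltac:(lia).
rewrite cc_neg; last by lia.
rewrite (_ : (k.-1 - i.+1).+1 = k.-1 - i)%N; last by lia.
rewrite cc_neg; last by lia.
lr.
Qed.

Lemma O1 : 1 - alpha lam k - cc 0 <= 0.
Proof. rewrite alphaE /cc S0 subn0; lr. Qed.

Lemma O2 : 1 + cc k.-1 - alpha lam k <= 0.
Proof. rewrite alphaE /cc subnn S0; lr. Qed.

Lemma Psi_set x i v : (i < k)%N ->
  Psi (set_nth 0 x i v) = Psi x + cc i * (v - x`_i).
Proof.
move=> hi; rewrite /Psi (bigD1 (Ordinal hi)) //= [in RHS](bigD1 (Ordinal hi)) //=.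
rewrite nth_set_nth /= eqxx.
have -> : \sum_(j < k | j != Ordinal hi) cc j * (set_nth 0 x i v)`_j =
          \sum_(j < k | j != Ordinal hi) cc j * x`_j.
  apply: eq_bigr => j hj; rewrite nth_set_nth /=.
  by case: eqP => // ej; move: hj; rewrite -val_eqE /= ej eqxx.
lr.
Qed.

Lemma Psi_ge0 x : sorted <=%R x -> size x = k -> 0 <= Psi x.
Proof.
move=> sx hs.
have E : Psi x = - \sum_(j < k) cc j * x`_(k.-1 - j).
  rewrite /Psi (reindex_inj rev_ord_inj) /= -sumrN; apply: eq_bigr => j _.
  have hj := ltn_ord j.
  rewrite (_ : (k - j.+1 = k.-1 - j)%N); last by lia.
  by rewrite cc_neg ?mulNr ?opprK //; lia.
suff : 0 <= Psi x + Psi x by lr.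
rewrite {1}E addrC -sumrB sumr_ge0 // => j _.
rewrite -mulrBr.
have hj := ltn_ord j.
have mono := le_sorted_leq_nth 0 sx.
have in1 : (j : nat) \in [pred n | (n < size x)%N] by rewrite inE hs.
have in2 : (k.-1 - j)%N \in [pred n | (n < size x)%N] by rewrite inE hs; lia.
case: (leqP j (k.-1 - j)) => h.
- apply: mulr_le0.
  + rewrite /cc subr_le0; apply: S_mono; lia.
  + rewrite subr_le0; exact: mono.
- apply: mulr_ge0.
  + rewrite /cc subr_ge0; apply: S_mono; lia.
  + rewrite subr_ge0; apply: mono => //; lia.
Qed.


Lemma sorted_set (x : seq R) i v : sorted <=%R x -> (i < size x)%N ->
  ((0 < i)%N -> x`_i.-1 <= v) -> ((i.+1 < size x)%N -> v <= x`_i.+1) ->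
  sorted <=%R (set_nth 0 x i v).
Proof.
move=> sx hi h1 h2; apply/(sortedP 0) => j; rewrite size_set_nth => hj.
have hj' : (j.+1 < size x)%N by move: hj; rewrite /maxn; case: ifP => //; lia.
rewrite !nth_set_nth /=.
have := (sortedP 0 sx) j hj'.
case: (eqVneq j i) => [eji|nji].
  subst j => _; rewrite (_ : (i.+1 == i) = false); last by apply/negbTE; lia.
  exact: h2.
case: (eqVneq j.+1 i) => [ej|nj1] //.
move=> _; rewrite -ej in h1; exact: h1.
Qed.

Lemma sorted_count (x : seq R) r j : sorted <=%R x -> (j < size x)%N ->
  (x`_j < r) = (j < count (fun y : R => (y < r)%R) x)%N.
Proof.
elim: x j => [|a x IH] j //= sx hj.
have sx' := path_sorted sx.
have amin := order_path_min le_trans sx.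
case: (ltP a r) => har /=.
- case: j hj => [|j] hj //=; rewrite IH //.
- have c0 : count (fun y => y < r) x = 0%N.
    apply/eqP; rewrite -leqn0 leqNgt -has_count; apply/hasP => -[y yi].
    by move/allP: amin => /(_ y yi) ay; rewrite ltNge (le_trans har ay).
  rewrite c0 add0n; case: j hj => [|j] hj /=; first by rewrite ltNge har.
  have : a <= x`_j by move/allP: amin; apply; apply: mem_nth.
  by move=> ay; apply/negbTE; rewrite -leNgt (le_trans har ay).
Qed.


Lemma alpha_ge0 : 0 <= alpha lam k.
Proof. rewrite alphaE; have := S_mono (leq0n k.-1); rewrite S0; lr. Qed.

Lemma acc (x x' ys : seq R) p m r cd d e :
  sorted <=%R x' -> size x = k -> size x' = k -> sorted <=%R ys -> size ys = k ->
  (p < k)%N -> (m < k)%N ->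
  ((p <= m)%N /\ x`_m <= r \/ (m <= p)%N /\ r <= x`_m) ->
  (forall w, size w = k -> w`_m = r -> costL x' w <= costL x w - d + e) ->
  cd + Psi x' - Psi x <= alpha lam k * (d - e) ->
  cd + alpha lam k * costL x' (sort <=%R (set_nth 0 ys p r)) + Psi x' <=
  alpha lam k * `|ys`_p - r| + (alpha lam k * costL x ys + Psi x).
Proof.
move=> sx' hx hx' sy hy hp hm shape H1 H2.
have [w [pw sw wm cw]] : exists w, [/\ perm_eq w (set_nth 0 ys p r), size w = k,
   w`_m = r & costL x w <= costL x ys + `|ys`_p - r|].
  case: shape => [[pm xr]|[mp rx]].
  - have hh : (p <= m < size ys)%N by rewrite pm hy hm.
    have [a1 a2 a3 a4] := match1 sy (etrans hx (esym hy)) hh xr.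
    by eexists; split; [exact: a1|rewrite a2|exact: a3|exact: a4].
  - have hh : (m <= p < size ys)%N by rewrite mp hy hp.
    have [a1 a2 a3 a4] := match2 sy (etrans hx (esym hy)) hh rx.
    by eexists; split; [exact: a1|rewrite a2|exact: a3|exact: a4].
set z := set_nth 0 ys p r.
have sz : size z = k by rewrite /z size_set_nth hy; apply/maxn_idPr.
have hr : costL x' (sort <=%R z) <= costL x' w.
  apply: rearr => //; first exact: (sort_sorted le_total).
  - by rewrite perm_sym perm_sort perm_sym.
  - by rewrite size_sort sz.
have h1 : costL x' (sort <=%R z) <= costL x ys + `|ys`_p - r| - d + e.
  have := H1 w sw wm; lr.
have := ler_wpM2l alpha_ge0 h1.
lr.
Qed.

Lemma two_pos (x : seq R) i u v : sorted <=%R x -> size x = k -> (i.+1 < k)%N ->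
  x`_i <= u -> u <= v -> v <= x`_i.+1 ->
  sorted <=%R (set_nth 0 (set_nth 0 x i u) i.+1 v) /\
  size (set_nth 0 (set_nth 0 x i u) i.+1 v) = k.
Proof.
move=> sx hx hi h1 h2 h3.
have hle := le_sorted_leq_nth 0 sx.
have s1 : sorted <=%R (set_nth 0 x i u).
  apply: sorted_set => //; first by rewrite hx; lia.
  - move=> i0; apply: le_trans h1; apply: hle; rewrite ?inE ?hx //; lia.
  - move=> _; exact: le_trans h2 h3.
have sz1 : size (set_nth 0 x i u) = k by rewrite size_set_nth hx; apply/maxn_idPr; lia.
split; last by rewrite size_set_nth sz1; apply/maxn_idPr.
apply: sorted_set => //; first by rewrite sz1.
- by move=> _; rewrite /= nth_set_nth /= eqxx.
- rewrite sz1 => hi2; rewrite nth_set_nth /=.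
  rewrite (_ : (i.+2 == i) = false); last by apply/negbTE; lia.
  apply: le_trans h3 _; apply: hle; rewrite ?inE ?hx //; lia.
Qed.

Lemma costL_two (x w : seq R) i u v : size x = k -> size w = k -> (i.+1 < k)%N ->
  costL (set_nth 0 (set_nth 0 x i u) i.+1 v) w =
  costL x w + (`|u - w`_i| - `|x`_i - w`_i|) + (`|v - w`_i.+1| - `|x`_i.+1 - w`_i.+1|).
Proof.
move=> hx hw hi.
have sz1 : size (set_nth 0 x i u) = k by rewrite size_set_nth hx; apply/maxn_idPr; lia.
rewrite costL_setx ?sz1 ?hw //.
rewrite costL_setx ?hx ?hw //; last by lia.
rewrite nth_set_nth /= (_ : (i.+1 == i) = false); last by apply/negbTE; lia.
lr.
Qed.

Lemma Psi_two (x : seq R) i u v : (i.+1 < k)%N ->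
  Psi (set_nth 0 (set_nth 0 x i u) i.+1 v) =
  Psi x + cc i * (u - x`_i) + cc i.+1 * (v - x`_i.+1).
Proof.
move=> hi; rewrite Psi_set // Psi_set; last by lia.
rewrite nth_set_nth /= (_ : (i.+1 == i) = false) //; apply/negbTE; lia.
Qed.

Lemma twoL (x ys : seq R) i u v p r cd d e :
  sorted <=%R x -> size x = k -> (i.+1 < k)%N ->
  x`_i <= u -> u <= v -> v <= x`_i.+1 -> u <= r ->
  sorted <=%R ys -> size ys = k -> (p <= i)%N ->
  u - x`_i = d -> x`_i.+1 - v <= e ->
  cd + cc i * (u - x`_i) + cc i.+1 * (v - x`_i.+1) <= alpha lam k * (d - e) ->
  let x' := set_nth 0 (set_nth 0 x i u) i.+1 v in
  [/\ sorted <=%R x', size x' = k &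
  cd + alpha lam k * costL x' (sort <=%R (set_nth 0 ys p r)) + Psi x' <=
  alpha lam k * `|ys`_p - r| + (alpha lam k * costL x ys + Psi x)].
Proof.
move=> sx hx hi h1 h2 h3 hr sy hy hp hd he H2 x'.
have [sx' sz'] := two_pos sx hx hi h1 h2 h3.
split => //.
have hpk : (p < k)%N by apply: leq_ltn_trans hp (ltnW hi).
have hik : (i < k)%N by apply: ltnW.
have H1' : forall w, size w = k -> w`_i = r -> costL x' w <= costL x w - d + e.
  move=> w sw wm; rewrite costL_two // wm.
  have : `|v - w`_i.+1| - `|x`_i.+1 - w`_i.+1| <= x`_i.+1 - v.
    by move: h3; clear; nsplit; lra.
  have : `|u - r| - `|x`_i - r| = x`_i - u.
    by move: h1 hr; clear; nsplit; lra.
  move: hd he; clear; lra.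
have H2' : cd + Psi x' - Psi x <= alpha lam k * (d - e) by rewrite Psi_two //; move: H2; clear; lra.
have hxr : x`_i <= r by apply: le_trans h1 hr.
exact: (acc sx' hx sz' sy hy hpk hik (or_introl (conj hp hxr)) H1' H2').
Qed.

Lemma twoR (x ys : seq R) i u v p r cd d e :
  sorted <=%R x -> size x = k -> (i.+1 < k)%N ->
  x`_i <= u -> u <= v -> v <= x`_i.+1 -> r <= v ->
  sorted <=%R ys -> size ys = k -> (i < p < k)%N ->
  x`_i.+1 - v = d -> u - x`_i <= e ->
  cd + cc i * (u - x`_i) + cc i.+1 * (v - x`_i.+1) <= alpha lam k * (d - e) ->
  let x' := set_nth 0 (set_nth 0 x i u) i.+1 v in
  [/\ sorted <=%R x', size x' = k &
  cd + alpha lam k * costL x' (sort <=%R (set_nth 0 ys p r)) + Psi x' <=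
  alpha lam k * `|ys`_p - r| + (alpha lam k * costL x ys + Psi x)].
Proof.
move=> sx hx hi h1 h2 h3 hr sy hy /andP [hp hpk] hd he H2 x'.
have [sx' sz'] := two_pos sx hx hi h1 h2 h3.
split => //.
have H1' : forall w, size w = k -> w`_i.+1 = r -> costL x' w <= costL x w - d + e.
  move=> w sw wm; rewrite costL_two // wm.
  have : `|u - w`_i| - `|x`_i - w`_i| <= u - x`_i.
    by move: h1; clear; nsplit; lra.
  have : `|v - r| - `|x`_i.+1 - r| = v - x`_i.+1.
    by move: h3 hr; clear; nsplit; lra.
  move: hd he; clear; lra.
have H2' : cd + Psi x' - Psi x <= alpha lam k * (d - e) by rewrite Psi_two //; move: H2; clear; lra.
have hxr : r <= x`_i.+1 by apply: le_trans hr h3.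
exact: (acc sx' hx sz' sy hy hpk hi (or_intror (conj hp hxr)) H1' H2').
Qed.


Lemma dc_good (x ys : seq R) r p : sorted <=%R x -> size x = k ->
  sorted <=%R ys -> size ys = k -> (p < k)%N ->
  [/\ sorted <=%R (dc_step lam x r p).1, size (dc_step lam x r p).1 = k &
  (dc_step lam x r p).2 + alpha lam k * costL (dc_step lam x r p).1
     (sort <=%R (set_nth 0 ys p r)) + Psi (dc_step lam x r p).1 <=
  alpha lam k * `|ys`_p - r| + (alpha lam k * costL x ys + Psi x)].
Proof.
move=> sx hx sy hy hp.
have hle := le_sorted_leq_nth 0 sx.
have hk1 : (k.-1 < k)%N by rewrite prednK.
have hl0 := l0; have hl1 := l1.
rewrite /dc_step hx.
case: ifP => c1.
  rewrite /=; set x' := set_nth 0 x 0 r.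
  have s' : sorted <=%R x'.
    apply: sorted_set => //; first by rewrite hx.
    move=> h1; have h1k : (1 < k)%N by rewrite -hx.
    apply: le_trans (ltW c1) _; apply: hle; rewrite ?inE ?hx //.
  have z' : size x' = k by rewrite size_set_nth hx; apply/maxn_idPr.
  split => //.
  have H1 : forall w, size w = k -> w`_0 = r -> costL x' w <= costL x w - (x`_0 - r) + 0.
    move=> w sw wm; rewrite costL_setx ?hx ?sw // wm subrr normr0 gtr0_norm ?subr_gt0 //.
    lra.
  have H2 : x`_0 - r + Psi x' - Psi x <= alpha lam k * ((x`_0 - r) - 0).
    rewrite Psi_set //; have := ler_wpM2l (x := x`_0 - r) ltac:(lra) O1.
    lra.
  exact: (acc s' hx z' sy hy hp k0 (or_intror (conj (leq0n p) (ltW c1))) H1 H2).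
case: ifP => c2.
  rewrite /=; set x' := set_nth 0 x k.-1 r.
  have s' : sorted <=%R x'.
    apply: sorted_set => //; first by rewrite hx.
    - move=> h1; apply: le_trans _ (ltW c2); apply: hle; rewrite ?inE ?hx //.
      + exact: leq_ltn_trans (leq_pred _) hk1.
      + exact: leq_pred.
    - by rewrite hx prednK // ltnn.
  have z' : size x' = k by rewrite size_set_nth hx prednK //; apply/maxn_idPr.
  split => //.
  have H1 : forall w, size w = k -> w`_k.-1 = r ->
      costL x' w <= costL x w - (r - x`_k.-1) + 0.
    move=> w sw wm; rewrite costL_setx ?hx ?sw // wm subrr normr0 ltr0_norm ?subr_lt0 //.
    lra.
  have H2 : r - x`_k.-1 + Psi x' - Psi x <= alpha lam k * ((r - x`_k.-1) - 0).
    rewrite Psi_set //; have := ler_wpM2l (x := r - x`_k.-1) ltac:(lra) O2.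
    lra.
  have hpk : (p <= k.-1)%N by rewrite -ltnS prednK.
  exact: (acc s' hx z' sy hy hp hk1 (or_introl (conj hpk (ltW c2))) H1 H2).
case: ifP => c3.
  rewrite /=; split => //.
  have H1 : forall w, size w = k -> w`_p = r -> costL x w <= costL x w - 0 + 0.
    move=> *; lra.
  have H2 : 0 + Psi x - Psi x <= alpha lam k * (0 - 0) by lra.
  have shape : ((p <= p)%N /\ x`_p <= r \/ (p <= p)%N /\ r <= x`_p).
    by case: (lerP x`_p r) => h; [left|right; split=> //; apply: ltW].
  have := acc sx hx hx sy hy hp hp shape H1 H2; lra.
have ne : forall j, (j < k)%N -> x`_j != r.
  move=> j hj; apply/eqP => e; move/negbT: c3 => /negP; apply.
  by rewrite -e; apply: mem_nth; rewrite hx.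
have hsc : forall j, (j < k)%N -> (x`_j < r) = (j < count (fun y : R => (y < r)%R) x)%N.
  by move=> j hj; apply: sorted_count => //; rewrite hx.
set n := count _ x.
have hx0 : x`_0 < r.
  by rewrite lt_neqAle ne // leNgt c1.
have hn0 : (0 < n)%N by rewrite -hsc.
have hnk : (n < k)%N.
  have := hsc k.-1 hk1; rewrite c2 => /esym/negbT; rewrite -leqNgt => h.
  exact: leq_ltn_trans h hk1.
set i := n.-1.
have hin : i.+1 = n by rewrite /i prednK.
have hi : (i.+1 < k)%N by rewrite hin.
have ha : x`_i < r by rewrite hsc ?hin //; apply: ltnW.
have hb : r < x`_i.+1.
  have := hsc i.+1 hi; rewrite hin ltnn => /negbT; rewrite -leNgt => hb.
  by rewrite lt_neqAle eq_sym ne // hb.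
set a := x`_i in ha *; set b := x`_i.+1 in hb *.
have I1i := I1 hi; have I2i := I2 hi.
case: ifP => hpi.
- case: ifP => hl.
  + rewrite /=.
    have e0 : 0 <= lam * (r - a) by apply: mulr_ge0; lra.
    have h1 : a <= r by apply: ltW.
    have h2 : r <= b - lam * (r - a) by lra.
    have h3 : b - lam * (r - a) <= b by lra.
    have h5 : r - a = r - a by [].
    have h6 : b - (b - lam * (r - a)) <= lam * (r - a) by lra.
    have h7 : (1 + lam) * (r - a) + cc i * (r - a) + cc i.+1 * (b - lam * (r - a) - b) <=
              alpha lam k * ((r - a) - lam * (r - a)).
      have := ler_wpM2l (x := r - a) ltac:(lra) I1i; lra.
    exact: (twoL sx hx hi h1 h2 h3 (lexx r) sy hy hpi h5 h6 h7).
  + rewrite /=.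
    have lt0 : 0 < lam.
      rewrite lt_neqAle l0 andbT; apply/eqP => e0; move/negbT: hl; rewrite -e0 mul0r -ltNge; lra.
    set D := (b - r) / lam.
    have hD : lam * D = b - r by rewrite /D mulrC divfK // (gt_eqF lt0).
    have hD1 : D < r - a.
      by rewrite -(ltr_pM2l lt0) hD; move/negbT: hl; rewrite -ltNge.
    have hD0 : 0 <= D by rewrite /D; apply: divr_ge0; lra.
    have h1 : a <= a + D by lra.
    have h2 : a + D <= r by lra.
    have h3 : r <= b by apply: ltW.
    have h5 : a + D - a = D by lra.
    have h6 : b - r <= lam * D by lra.
    have h7 : D + (b - r) + cc i * (a + D - a) + cc i.+1 * (r - b) <=
              alpha lam k * (D - lam * D).
      have := ler_wpM2l (x := D) ltac:(lra) I1i.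
      have : cc i.+1 * (lam * D) = cc i.+1 * (b - r) by rewrite hD.
      lra.
    exact: (twoL sx hx hi h1 h2 h3 h2 sy hy hpi h5 h6 h7).
- have hpi' : (i < p < k)%N by rewrite hp andbT ltnNge hpi.
  case: ifP => hl.
  + rewrite /=.
    have e0 : 0 <= lam * (b - r) by apply: mulr_ge0; lra.
    have h1 : a <= a + lam * (b - r) by lra.
    have h2 : a + lam * (b - r) <= r by lra.
    have h3 : r <= b by apply: ltW.
    have h5 : b - r = b - r by [].
    have h6 : a + lam * (b - r) - a <= lam * (b - r) by lra.
    have h7 : (1 + lam) * (b - r) + cc i * (a + lam * (b - r) - a) + cc i.+1 * (r - b) <=
              alpha lam k * ((b - r) - lam * (b - r)).
      have := ler_wpM2l (x := b - r) ltac:(lra) I2i; lra.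
    exact: (twoR sx hx hi h1 h2 h3 (lexx r) sy hy hpi' h5 h6 h7).
  + rewrite /=.
    have lt0 : 0 < lam.
      rewrite lt_neqAle l0 andbT; apply/eqP => e0; move/negbT: hl; rewrite -e0 mul0r -ltNge; lra.
    set D := (r - a) / lam.
    have hD : lam * D = r - a by rewrite /D mulrC divfK // (gt_eqF lt0).
    have hD1 : D < b - r.
      by rewrite -(ltr_pM2l lt0) hD; move/negbT: hl; rewrite -ltNge.
    have hD0 : 0 <= D by rewrite /D; apply: divr_ge0; lra.
    have h1 : a <= r by apply: ltW.
    have h2 : r <= b - D by lra.
    have h3 : b - D <= b by lra.
    have h5 : b - (b - D) = D by lra.
    have h6 : r - a <= lam * D by lra.
    have h7 : D + (r - a) + cc i * (r - a) + cc i.+1 * (b - D - b) <=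
              alpha lam k * (D - lam * D).
      have := ler_wpM2l (x := D) ltac:(lra) I2i.
      have : cc i * (lam * D) = cc i * (r - a) by rewrite hD.
      lra.
    exact: (twoR sx hx hi h1 h2 h3 h2 sy hy hpi' h5 h6 h7).
Qed.

Definition Phi (x y : seq R) := alpha lam k * costL x (sort <=%R y) + Psi x.

Lemma Phi_ge0 x y : sorted <=%R x -> size x = k -> 0 <= Phi x y.
Proof.
move=> sx hx; rewrite /Phi; apply: addr_ge0; last exact: Psi_ge0.
apply: mulr_ge0; [exact: alpha_ge0|exact: costL_ge0].
Qed.

Lemma main_ind I x y : sorted <=%R x -> size x = k -> size y = k ->
  all (fun q => (q.2 < k)%N) I ->
  dc_cost lam x I <= alpha lam k * FtP y I + Phi x y.
Proof.
elim: I x y => [|[r p] I IH] x y sx hx hy /=.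
  move=> _; have := Phi_ge0 y sx hx; lra.
move=> /andP [hp hI].
have sy : sorted <=%R (sort <=%R y) by exact: (sort_sorted le_total).
have hsy : size (sort <=%R y) = k by rewrite size_sort.
have [sx' hx' H] := dc_good r sx hx sy hsy hp.
set y' := (ftp_step y r p).1.
have ey' : y' = sort <=%R (set_nth 0 (sort <=%R y) p r) by [].
have hy' : size y' = k.
  by rewrite ey' size_sort size_set_nth hsy; apply/maxn_idPr.
have := IH _ y' sx' hx' hy' hI.
have EP : Phi (dc_step lam x r p).1 y' = alpha lam k * costL (dc_step lam x r p).1
     (sort <=%R (set_nth 0 (sort <=%R y) p r)) + Psi (dc_step lam x r p).1.
  by rewrite /Phi ey' (sorted_sort le_trans) //; exact: (sort_sorted le_total).
rewrite EP /ftp_step /= -/y' => h.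
rewrite /Phi.
have := ler_wpM2l alpha_ge0 (lexx (FtP y' I)).
lra.
Qed.

Lemma final s0 : size s0 = k ->
  exists c : R, 0 < c /\
    forall I : seq (R * nat), all (fun q => (q.2 < k)%N) I ->
      LambdaDC lam s0 I <= alpha lam k * FtP s0 I + c.
Proof.
move=> hs.
have sx : sorted <=%R (sort <=%R s0) by exact: (sort_sorted le_total).
have hx : size (sort <=%R s0) = k by rewrite size_sort.
exists (Phi (sort <=%R s0) s0 + 1); split.
  have := Phi_ge0 s0 sx hx; lra.
move=> I hI; rewrite /LambdaDC.
have := main_ind (y := s0) sx hx hs hI; lra.
Qed.

End Pot.

Unset Implicit Arguments.

Theorem lemma8 (R : realFieldType) (k : nat) (lam : R) (s0 : seq R) :
  (0 < k)%N -> size s0 = k -> 0 <= lam <= 1 ->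
  exists c : R, 0 < c /\
    forall I : seq (R * nat), all (fun q => (q.2 < k)%N) I ->
      LambdaDC lam s0 I <= alpha lam k * FtP s0 I + c.
Proof.
move=> k0 hs /andP [l0 l1].
exact: (final l0 l1 k0 hs).
Qed.
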